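(* Let $m\ge2$ and consider a preferential (dynamic) attachment circuit of index $m$. Let $Y_n^{(0)}$ and $Y_n^{(1)}$ be the numbers of nodes of outdegree $0$ and $1$ after $n$ insertions. Then, as $n\to\infty$, $\frac1n$ times the covariance matrix of the random vector $(Y_n^{(0)},Y_n^{(1)})^\top$ converges to $$\begin{pmatrix}\frac{2m^2(m+1)}{(3m+1)(2m+1)^2} & -\frac{4(m+1)^2m^2}{(4m+1)(3m+1)(2m+1)^2}\\[2pt] -\frac{4(m+1)^2m^2}{(4m+1)(3m+1)(2m+1)^2} & \frac{2m^2(m+1)(48m^3+59m^2+27m+4)}{(5m+1)(4m+1)(3m+1)^2(2m+1)^2}\end{pmatrix}.$$
   Context: Preferential (dynamic) attachment circuit of index $m\ge1$: at time $0$ there is a single node labeled $0$. At each time $n\ge1$ a new node labeled $n$ is added and $m$ parents are chosen for it one at a time, with replacement, among nodes $0,\dots,n-1$. Before the $(i+1)$-th choice ($i=0,\dots,m-1$), each existing node $v$ is chosen with probability $\frac{d_i(v)+1}{\sum_{x}(d_i(x)+1)}$, where $d_i(x)$ is the outdegree of $x$ in the current multigraph including the edges created by the first $i$ choices for node $n$; after each choice an edge from the chosen parent to node $n$ is immediately added (multi-edges allowed, counted with multiplicity). *)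

(* Defs.v *)
From HB Require Import structures.
From mathcomp Require Import all_boot all_order all_algebra.
From mathcomp Require Import all_classical all_reals all_analysis.
Set Implicit Arguments. Unset Strict Implicit. Unset Printing Implicit Defensive.
Import Order.TTheory GRing.Theory Num.Theory numFieldNormedType.Exports.
Local Open Scope ring_scope.

(* A state of the preferential attachment circuit is the outdegree vector
   d : seq nat, where nth 0 d v is the outdegree of node v (nodes 0 .. size d - 1). *)

Definition pa_weight (d : seq nat) : nat := (\sum_(v < size d) (nth 0%N d v).+1)%N.

Fixpoint pa_choices {R : realType} (k : nat) (d : seq nat)
  (f : seq nat -> R) : R :=
  match k with
  | 0 => f d
  | k'.+1 => \sum_(v < size d)
      (((nth 0%N d v).+1)%:R / (pa_weight d)%:R) * pa_choices k' (incr_nth d v) f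
  end.

Fixpoint pa_insert {R : realType} (m n : nat) (d : seq nat)
  (f : seq nat -> R) : R :=
  match n with
  | 0 => f d
  | n'.+1 => pa_choices m d (fun d' => pa_insert m n' (rcons d' 0%N) f)
  end.

Definition pa_E {R : realType} (m n : nat) (f : seq nat -> R) : R :=
  pa_insert m n [:: 0%N] f.

Definition Ycount {R : realType} (j : nat) (d : seq nat) : R :=
  (count (pred1 j) d)%:R.

Definition pa_cov {R : realType} (m n : nat) : 'M[R]_2 :=
  \matrix_(i < 2, j < 2)
    (pa_E m n (fun d => Ycount i d * Ycount j d)
     - pa_E m n (Ycount i) * pa_E m n (Ycount j)).

Definition pa_limit {R : realType} (m : nat) : 'M[R]_2 :=
  let M := m%:R : R in
  let off := - (4 * (M + 1) ^+ 2 * M ^+ 2)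
              / ((4 * M + 1) * (3 * M + 1) * (2 * M + 1) ^+ 2) in
  \matrix_(i < 2, j < 2)
    if (i == 0 :> nat) && (j == 0 :> nat) then
      2 * M ^+ 2 * (M + 1) / ((3 * M + 1) * (2 * M + 1) ^+ 2)
    else if (i == 1 :> nat) && (j == 1 :> nat) then
      2 * M ^+ 2 * (M + 1) * (48 * M ^+ 3 + 59 * M ^+ 2 + 27 * M + 4)
        / ((5 * M + 1) * (4 * M + 1) * (3 * M + 1) ^+ 2 * (2 * M + 1) ^+ 2)
    else off.

(* Main.v *)
Require Import Defs.
From HB Require Import structures.
From mathcomp Require Import all_boot all_order all_algebra.
From mathcomp Require Import all_classical all_reals all_analysis.
From mathcomp Require Import ring lra zify.
Import Order.TTheory GRing.Theory Num.Theory numFieldNormedType.Exports.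
Local Open Scope ring_scope.
Local Open Scope classical_set_scope.
Set Implicit Arguments. Unset Strict Implicit. Unset Printing Implicit Defensive.

Section Comb.
Variable R : realType.

Lemma pa_weightE d : pa_weight d = (sumn d + size d)%N.
Proof.
rewrite /pa_weight sumnE (big_nth 0%N) big_mkord.
rewrite (eq_bigr (fun v : 'I_(size d) => (nth 0%N d v + 1)%N)); last by move=> i _; rewrite addn1.
by rewrite big_split /= sum1_card card_ord.
Qed.

Lemma incr_nth_cat s1 x s2 : incr_nth (s1 ++ x :: s2) (size s1) = s1 ++ x.+1 :: s2.
Proof. by elim: s1 => //= y s1 ->. Qed.

Lemma decomp (d : seq nat) v : (v < size d)%N ->
  d = take v d ++ nth 0%N d v :: drop v.+1 d /\ size (take v d) = v.
Proof.
move=> hv; split; first by rewrite -drop_nth // cat_take_drop.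
by rewrite size_take hv.
Qed.

Lemma count_incr_cat j s1 x s2 :
  (count (pred1 j) (incr_nth (s1 ++ x :: s2) (size s1)) + (x == j) =
   count (pred1 j) (s1 ++ x :: s2) + (x.+1 == j))%N.
Proof.
rewrite incr_nth_cat !count_cat /=.
case: (x == j); case: (_.+1 == j); lia.
Qed.

Lemma count_incr j d v : (v < size d)%N ->
  (count (pred1 j) (incr_nth d v) + (nth 0%N d v == j) =
   count (pred1 j) d + ((nth 0%N d v).+1 == j))%N.
Proof.
move=> hv; have [E S] := decomp hv.
by have := count_incr_cat j (take v d) (nth 0%N d v) (drop v.+1 d); rewrite S -E.
Qed.

Lemma weight_incr_cat s1 x s2 :
  pa_weight (incr_nth (s1 ++ x :: s2) (size s1)) = (pa_weight (s1 ++ x :: s2)).+1.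
Proof. rewrite incr_nth_cat !pa_weightE !sumn_cat !size_cat /=; lia. Qed.

Lemma weight_incr d v : (v < size d)%N -> pa_weight (incr_nth d v) = (pa_weight d).+1.
Proof.
move=> hv; have [E S] := decomp hv.
by have := weight_incr_cat (take v d) (nth 0%N d v) (drop v.+1 d); rewrite S -E.
Qed.

Lemma weight_rcons d : pa_weight (rcons d 0%N) = (pa_weight d).+1.
Proof. by rewrite !pa_weightE -cats1 sumn_cat size_cat /=; lia. Qed.

Lemma Y0_rcons d : Ycount 0 (rcons d 0%N) = Ycount 0 d + 1 :> R.
Proof. by rewrite /Ycount -cats1 count_cat /= natrD addn0. Qed.

Lemma Y1_rcons d : Ycount 1 (rcons d 0%N) = Ycount 1 d :> R.
Proof. by rewrite /Ycount -cats1 count_cat /= !addn0. Qed.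

Lemma sum_ind (d : seq nat) j :
  \sum_(v < size d) ((nth 0%N d v == j)%:R : R) = Ycount j d.
Proof.
rewrite /Ycount -natr_sum; congr (_%:R).
rewrite -sum1_count (big_nth 0%N) big_mkord.
by rewrite [RHS]big_mkcond; apply: eq_bigr => i _; rewrite /=; case: (_ == _).
Qed.

Lemma onestep (G : R -> R -> R) d :
  \sum_(v < size d) (((nth 0%N d v).+1)%:R / (pa_weight d)%:R) *
      G (Ycount 0 (incr_nth d v)) (Ycount 1 (incr_nth d v))
  = (Ycount 0 d * G (Ycount 0 d - 1) (Ycount 1 d + 1)
     + 2 * Ycount 1 d * G (Ycount 0 d) (Ycount 1 d - 1)
     + ((pa_weight d)%:R - Ycount 0 d - 2 * Ycount 1 d) * G (Ycount 0 d) (Ycount 1 d))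
    / (pa_weight d)%:R.
Proof.
set W := (pa_weight d)%:R; set a := Ycount 0 d; set b := Ycount 1 d.
have step : forall v : 'I_(size d),
  (((nth 0%N d v).+1)%:R / W) * G (Ycount 0 (incr_nth d v)) (Ycount 1 (incr_nth d v))
  = W^-1 * (((nth 0%N d v == 0%N)%:R * G (a - 1) (b + 1)
     + 2 * (nth 0%N d v == 1%N)%:R * G a (b - 1))
     + ((nth 0%N d v).+1%:R - (nth 0%N d v == 0%N)%:R - 2 * (nth 0%N d v == 1%N)%:R) * G a b).
  move=> v; have hv := ltn_ord v.
  have h0 := count_incr 0 hv; have h1 := count_incr 1 hv.
  have e0 : Ycount 0 (incr_nth d v) = a - (nth 0%N d v == 0%N)%:R :> R.
    have := congr1 (fun n => n%:R : R) h0; rewrite !natrD /= addr0 => H.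
    by rewrite /a /Ycount -H addrK.
  have e1 : Ycount 1 (incr_nth d v) = b + (nth 0%N d v == 0%N)%:R - (nth 0%N d v == 1%N)%:R :> R.
    have := congr1 (fun n => n%:R : R) h1; rewrite !natrD /= => H.
    by rewrite /b /Ycount -H addrK.
  rewrite e0 e1; case: (nth 0%N d v) => [|[|k]] /=.
  - rewrite ?subr0 ?addr0; ring.
  - rewrite ?subr0 ?addr0; ring.
  - rewrite ?subr0 ?addr0; ring.
rewrite (eq_bigr _ (fun v _ => step v)) -mulr_sumr mulrC; congr (_ * _).
rewrite !big_split /= -!mulr_suml !sumrB -!mulr_sumr !sum_ind -natr_sum.
by rewrite /W /pa_weight.
Qed.
End Comb.
Section Coef.
Variable R : realType.
Implicit Types K W a b : R.

Definition uu (j : nat) K W : R := (W - j%:R) / (W + K - j%:R).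
Definition ii (j : nat) K W : R := (W + K - j%:R)^-1.
Definition cP1 K W := uu 1 K W.
Definition cQ K W := uu 2 K W * uu 1 K W.
Definition cR K W := K * uu 1 K W * ii 2 K W.
Definition cT K W := K * uu 2 K W * uu 1 K W * ii 3 K W.
Definition cU K W := uu 3 K W * uu 2 K W * uu 1 K W.
Definition cX K W := K * (K - 1) * uu 2 K W * uu 1 K W * ii 4 K W * ii 3 K W.
Definition cZ K W := K * uu 3 K W * uu 2 K W * uu 1 K W * ii 4 K W.
Definition cV K W := uu 4 K W * uu 3 K W * uu 2 K W * uu 1 K W.

Definition onestepF (G : R -> R -> R) W a b :=
  (a * G (a - 1) (b + 1) + 2 * b * G a (b - 1) + (W - a - 2 * b) * G a b) / W.

Definition h1 K W a b := a * cP1 K W.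
Definition h2 K W a b := b * cQ K W + a * cR K W.
Definition h3 K W a b := a * a * cQ K W + a * (cP1 K W - cQ K W).
Definition h4 K W a b := a * (a - 1) * cT K W + a * b * cU K W.
Definition h5 K W a b := h2 K W a b + a * (a - 1) * cX K W + 2 * a * b * cZ K W
   + b * (b - 1) * cV K W.

Lemma den_nz K W (j : nat) : 0 <= K -> j%:R < W -> W + K - j%:R != 0.
Proof. move=> hK hj; apply: lt0r_neq0; lra. Qed.

Section Keys.
Variables (K W a b : R).
Hypotheses (hK : 0 <= K) (hW : 5 <= W).
Let d1 : W + 1 + K - 1%:R != 0. Proof. by apply: den_nz => //; move: hK hW; lra. Qed.
Let d2 : W + 1 + K - 2%:R != 0. Proof. by apply: den_nz => //; move: hK hW; lra. Qed.
Let d3 : W + 1 + K - 3%:R != 0. Proof. by apply: den_nz => //; move: hK hW; lra. Qed.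
Let d4 : W + 1 + K - 4%:R != 0. Proof. by apply: den_nz => //; move: hK hW; lra. Qed.
Let e1 : W + (K + 1) - 1%:R != 0. Proof. by apply: den_nz => //; move: hK hW; lra. Qed.
Let e2 : W + (K + 1) - 2%:R != 0. Proof. by apply: den_nz => //; move: hK hW; lra. Qed.
Let e3 : W + (K + 1) - 3%:R != 0. Proof. by apply: den_nz => //; move: hK hW; lra. Qed.
Let e4 : W + (K + 1) - 4%:R != 0. Proof. by apply: den_nz => //; move: hK hW; lra. Qed.
Let w0 : W != 0. Proof. by apply: lt0r_neq0; move: hK hW; lra. Qed.
Let f1 : W - 1 != 0. Proof. by apply: lt0r_neq0; move: hK hW; lra. Qed.
Let f2 : W - 2 != 0. Proof. by apply: lt0r_neq0; move: hK hW; lra. Qed.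
Let f3 : W - 3 != 0. Proof. by apply: lt0r_neq0; move: hK hW; lra. Qed.
Let f4 : W - 4 != 0. Proof. by apply: lt0r_neq0; move: hK hW; lra. Qed.

Ltac fin := rewrite /onestepF /h5 /h1 /h2 /h3 /h4 /cP1 /cQ /cR /cT /cU /cX /cZ /cV /uu /ii;
  field; repeat (apply/andP; split); done.

Lemma key0 : onestepF (fun _ _ => 1) W a b = 1.
Proof. fin. Qed.
Lemma key1 : onestepF (h1 K (W + 1)) W a b = h1 (K + 1) W a b.
Proof. fin. Qed.
Lemma key2 : onestepF (h2 K (W + 1)) W a b = h2 (K + 1) W a b.
Proof. fin. Qed.
Lemma key3 : onestepF (h3 K (W + 1)) W a b = h3 (K + 1) W a b.
Proof. fin. Qed.
Lemma key4 : onestepF (h4 K (W + 1)) W a b = h4 (K + 1) W a b.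
Proof. fin. Qed.
Lemma key5 : onestepF (h5 K (W + 1)) W a b = h5 (K + 1) W a b.
Proof. fin. Qed.
Lemma base1 : h1 0 W a b = a. Proof. fin. Qed.
Lemma base2 : h2 0 W a b = b. Proof. fin. Qed.
Lemma base3 : h3 0 W a b = a * a. Proof. fin. Qed.
Lemma base4 : h4 0 W a b = a * b. Proof. fin. Qed.
Lemma base5 : h5 0 W a b = b * b. Proof. fin. Qed.
End Keys.

Definition Gq (c0 c1 c2 c3 c4 c5 a b : R) :=
  c0 + c1 * a + c2 * b + c3 * (a * a) + c4 * (a * b) + c5 * (b * b).
Definition Hq (c0 c1 c2 c3 c4 c5 K W a b : R) :=
  c0 + c1 * h1 K W a b + c2 * h2 K W a b + c3 * h3 K W a b + c4 * h4 K W a b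
  + c5 * h5 K W a b.

Lemma keyH c0 c1 c2 c3 c4 c5 K W a b : 0 <= K -> 5 <= W ->
  onestepF (Hq c0 c1 c2 c3 c4 c5 K (W + 1)) W a b = Hq c0 c1 c2 c3 c4 c5 (K + 1) W a b.
Proof.
move=> hK hW.
have -> : onestepF (Hq c0 c1 c2 c3 c4 c5 K (W + 1)) W a b =
  c0 * onestepF (fun _ _ => 1) W a b + c1 * onestepF (h1 K (W + 1)) W a b
  + c2 * onestepF (h2 K (W + 1)) W a b + c3 * onestepF (h3 K (W + 1)) W a b
  + c4 * onestepF (h4 K (W + 1)) W a b + c5 * onestepF (h5 K (W + 1)) W a b.
  by rewrite /onestepF /Hq; ring.
by rewrite (key0 a b hK hW) (key1 a b hK hW) (key2 a b hK hW) (key3 a b hK hW) (key4 a b hK hW) (key5 a b hK hW) /Hq mulr1.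
Qed.

Lemma baseH c0 c1 c2 c3 c4 c5 W a b : 5 <= W ->
  Hq c0 c1 c2 c3 c4 c5 0 W a b = Gq c0 c1 c2 c3 c4 c5 a b.
Proof.
move=> hW; have h0 : (0 : R) <= 0 by [].
by rewrite /Hq (base1 a b h0 hW) (base2 a b h0 hW) (base3 a b h0 hW) (base4 a b h0 hW) (base5 a b h0 hW).
Qed.
End Coef.

Local Open Scope classical_set_scope.
Section Moments.
Variable R : realType.
Notation Y0 := (@Ycount R 0).
Notation Y1 := (@Ycount R 1).

Lemma choices_closed c0 c1 c2 c3 c4 c5 k d : (5 <= pa_weight d)%N ->
  pa_choices k d (fun x => Gq c0 c1 c2 c3 c4 c5 (Y0 x) (Y1 x))
  = Hq c0 c1 c2 c3 c4 c5 k%:R (pa_weight d)%:R (Y0 d) (Y1 d).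
Proof.
elim: k d => [|k IH] d hd.
  by rewrite /= baseH // ler_nat.
rewrite /=.
rewrite (eq_bigr (fun v : 'I_(size d) => ((nth 0%N d v).+1%:R / (pa_weight d)%:R) *
   Hq c0 c1 c2 c3 c4 c5 k%:R ((pa_weight d)%:R + 1) (Y0 (incr_nth d v)) (Y1 (incr_nth d v)))); last first.
  move=> v _; rewrite IH ?weight_incr ?ltn_ord //; last by apply: leqW.
  by rewrite -[(pa_weight d).+1%:R]natr1.
transitivity (onestepF (Hq c0 c1 c2 c3 c4 c5 k%:R ((pa_weight d)%:R + 1)) (pa_weight d)%:R (Y0 d) (Y1 d)).
  exact: onestep.
rewrite keyH ?natr1 //; last by rewrite ler_nat.
Qed.

Lemma choices_extW k d (f g : seq nat -> R) :
  (forall x, pa_weight x = (pa_weight d + k)%N -> f x = g x) ->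
  pa_choices k d f = pa_choices k d g.
Proof.
elim: k d => [|k IH] d H /=; first by apply: H; rewrite addn0.
apply: eq_bigr => v _; congr (_ * _); apply: IH => x hx; apply: H.
by rewrite hx weight_incr ?ltn_ord // addSnnS.
Qed.

Lemma choices_lin k d c (f g : seq nat -> R) :
  pa_choices k d (fun x => c * f x + g x) = c * pa_choices k d f + pa_choices k d g.
Proof.
elim: k d => [|k IH] d //=.
under eq_bigr => v _ do rewrite IH mulrDr mulrCA.
by rewrite big_split /= -mulr_sumr.
Qed.

Lemma choices_const k d (c : R) : (0 < pa_weight d)%N -> pa_choices k d (fun _ => c) = c.
Proof.
elim: k d => [|k IH] d hd //=.
under eq_bigr => v _ do rewrite IH ?weight_incr ?ltn_ord //.
have hs : \sum_(v < size d) (nth 0%N d v).+1%:R / (pa_weight d)%:R = 1 :> R.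
  have := @onestep R (fun _ _ => 1) d; rewrite /=.
  rewrite (eq_bigr (fun v : 'I_(size d) => (nth 0%N d v).+1%:R / (pa_weight d)%:R)); last by move=> v _; rewrite mulr1.
  move=> ->; rewrite !mulr1.
  have -> : Y0 d + 2 * Y1 d + ((pa_weight d)%:R - Y0 d - 2 * Y1 d) = (pa_weight d)%:R by ring.
  by rewrite divff // pnatr_eq0 -lt0n.
by rewrite -mulr_suml hs mul1r.
Qed.

Variable m : nat.

Lemma insert_forward n d (f : seq nat -> R) :
  pa_insert m n.+1 d f = pa_insert m n d (fun x => pa_choices m x (fun y => f (rcons y 0%N))).
Proof.
elim: n d => [|n IH] d //=.
by congr (pa_choices _ _ _); apply: boolp.funext => y; exact: IH.
Qed.

Lemma insert_extW n d (f g : seq nat -> R) :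
  (forall x, pa_weight x = (pa_weight d + n * m.+1)%N -> f x = g x) ->
  pa_insert m n d f = pa_insert m n d g.
Proof.
elim: n d => [|n IH] d H /=; first by apply: H; rewrite mul0n addn0.
apply: choices_extW => x hx; apply: IH => y hy; apply: H.
rewrite hy weight_rcons hx; lia.
Qed.

Lemma insert_lin n d c (f g : seq nat -> R) :
  pa_insert m n d (fun x => c * f x + g x) = c * pa_insert m n d f + pa_insert m n d g.
Proof.
elim: n d => [|n IH] d //=.
rewrite -choices_lin; congr (pa_choices _ _ _); apply: boolp.funext => y; exact: IH.
Qed.

Lemma insert_const n d (c : R) : (0 < pa_weight d)%N -> pa_insert m n d (fun _ => c) = c.
Proof.
elim: n d => [|n IH] d hd //=.
transitivity (pa_choices m d (fun _ => c)); last exact: choices_const.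
congr (pa_choices _ _ _); apply: boolp.funext => y; apply: IH.
by rewrite weight_rcons.
Qed.

Definition EA n := pa_E m n (fun x => Y0 x).
Definition EB n := pa_E m n (fun x => Y1 x).
Definition EAA n := pa_E m n (fun x => Y0 x * Y0 x).
Definition EAB n := pa_E m n (fun x => Y0 x * Y1 x).
Definition EBB n := pa_E m n (fun x => Y1 x * Y1 x).

Lemma E_Gq n c0 c1 c2 c3 c4 c5 :
  pa_E m n (fun x => Gq c0 c1 c2 c3 c4 c5 (Y0 x) (Y1 x)) =
  c0 + c1 * EA n + c2 * EB n + c3 * EAA n + c4 * EAB n + c5 * EBB n.
Proof.
have -> : (fun x => Gq c0 c1 c2 c3 c4 c5 (Y0 x) (Y1 x)) =
  (fun x => c1 * Y0 x + (c2 * Y1 x + (c3 * (Y0 x * Y0 x) + (c4 * (Y0 x * Y1 x)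
     + (c5 * (Y1 x * Y1 x) + c0))))).
  by apply: boolp.funext => x; rewrite /Gq; ring.
rewrite /pa_E !insert_lin insert_const ?pa_weightE //.
rewrite /EA /EB /EAA /EAB /EBB /pa_E; ring.
Qed.

Lemma weight_E : pa_weight [:: 0%N] = 1%N.
Proof. by rewrite pa_weightE. Qed.

Definition Wn n : R := (1 + n * m.+1)%N%:R.

Lemma E_step n c0 c1 c2 c3 c4 c5 : (5 <= 1 + n * m.+1)%N ->
  let K := m%:R in let W := Wn n in
  let P1 := cP1 K W in let Q := cQ K W in let Rr := cR K W in let T := cT K W in
  let U := cU K W in let X := cX K W in let Z := cZ K W in let V := cV K W in
  let d0 := c0 + c1 + c3 in let d1 := c1 + 2 * c3 in let d2 := c2 + c4 in
  pa_E m n.+1 (fun x => Gq c0 c1 c2 c3 c4 c5 (Y0 x) (Y1 x)) =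
  d0 + (d1 * P1 + d2 * Rr + c3 * (P1 - Q) - c4 * T + c5 * (Rr - X)) * EA n
     + (d2 * Q + c5 * (Q - V)) * EB n
     + (c3 * Q + c4 * T + c5 * X) * EAA n
     + (c4 * U + 2 * c5 * Z) * EAB n
     + c5 * V * EBB n.
Proof.
move=> hn K W P1 Q Rr T U X Z V d0 d1 d2.
rewrite /pa_E insert_forward.
rewrite (@insert_extW n _ _ (fun x => Hq d0 d1 d2 c3 c4 c5 K W (Y0 x) (Y1 x))); last first.
  move=> x hx; rewrite weight_E in hx.
  have -> : W = (pa_weight x)%:R by rewrite /W /Wn hx.
  rewrite /K -choices_closed ?hx //.
  congr (pa_choices _ _ _); apply: boolp.funext => y.
  by rewrite Y0_rcons Y1_rcons /Gq /d0 /d1 /d2; ring.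
rewrite -/(pa_E m n _).
have -> : (fun x => Hq d0 d1 d2 c3 c4 c5 K W (Y0 x) (Y1 x)) =
  (fun x => Gq d0 (d1 * P1 + d2 * Rr + c3 * (P1 - Q) - c4 * T + c5 * (Rr - X))
     (d2 * Q + c5 * (Q - V)) (c3 * Q + c4 * T + c5 * X) (c4 * U + 2 * c5 * Z) (c5 * V)
     (Y0 x) (Y1 x)).
  apply: boolp.funext => x.
  rewrite /Hq /Gq /h1 /h2 /h3 /h4 /h5 /h2 -/P1 -/Q -/Rr -/T -/U -/X -/Z -/V; ring.
by rewrite E_Gq.
Qed.
End Moments.
Section Asym.
Variable R : realType.

Lemma lim_eq (f : nat -> R) (l1 l2 : R) : f @ \oo --> l1 -> l1 = l2 -> f @ \oo --> l2.
Proof. by move=> h <-. Qed.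

Lemma lim_near (f g : nat -> R) (N : nat) (l : R) :
  (forall n, (N <= n)%N -> f n = g n) -> g @ \oo --> l -> f @ \oo --> l.
Proof.
move=> H; apply: cvg_trans; apply: near_eq_cvg.
by exists N => // n /= hn; rewrite H.
Qed.

Lemma lim_invn : (fun n => (n%:R : R)^-1) @ \oo --> 0.
Proof.
rewrite -cvg_shiftS /=; exact: cvg_harmonic.
Qed.

Lemma lim_nd (s g : R) : 0 < s ->
  (fun n => n%:R * (s * n%:R + g)^-1) @ \oo --> s^-1.
Proof.
move=> s0.
apply: (@lim_near _ (fun n => (s + g * (n%:R)^-1)^-1) 1).
  move=> n hn; have n0 : (n%:R : R) != 0 by rewrite pnatr_eq0 -lt0n.
  by rewrite -invf_div; congr (_^-1); field.
have h : (fun n => s + g * (n%:R)^-1) @ \oo --> s.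
  apply: lim_eq; first exact: (cvgD (cvg_cst s) (cvgM (cvg_cst g) lim_invn)).
  by rewrite mulr0 addr0.
exact: (cvgV (lt0r_neq0 s0) h).
Qed.

Lemma lim_inv (s g : R) : 0 < s ->
  (fun n => (s * n%:R + g)^-1) @ \oo --> 0.
Proof.
move=> s0.
apply: (@lim_near _ (fun n => (n%:R * (s * n%:R + g)^-1) * (n%:R)^-1) 1).
  move=> n hn; have n0 : (n%:R : R) != 0 by rewrite pnatr_eq0 -lt0n.
  by rewrite mulrAC divff // mul1r.
apply: lim_eq; first exact: (cvgM (lim_nd g s0) lim_invn).
by rewrite mulr0.
Qed.

Lemma ces (e dl : nat -> R) (N : nat) :
  (forall n, (N <= n)%N -> `|e n.+1| <= `|e n| + `|dl n|) ->
  dl @ \oo --> 0 ->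
  (fun n => e n / n%:R) @ \oo --> 0.
Proof.
move=> H hd; apply/cvgrPdist_le => eps eps0.
have e2 : 0 < eps / 2 by rewrite divr_gt0.
have /cvgrPdist_le /(_ _ e2) [N1 _ hN1] := hd.
set M := maxn N N1.
have bound : forall k, `|e (M + k)%N| <= `|e M| + k%:R * (eps / 2).
  elim=> [|k IH]; first by rewrite addn0 mul0r addr0.
  rewrite addnS; apply: le_trans (H _ _) _.
    by apply: leq_trans (leq_maxl N N1) (leq_addr _ _).
  have hdl : `|dl (M + k)%N| <= eps / 2.
    have := hN1 (M + k)%N; rewrite /= sub0r normrN; apply.
    by apply: leq_trans (leq_maxr N N1) (leq_addr _ _).
  rewrite -natr1 mulrDl mul1r addrA lerD //.
have hq0 : (fun n => `|e M| * (n%:R)^-1) @ \oo --> (0:R).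
  by apply: lim_eq; [exact: (cvgM (cvg_cst _) lim_invn) | rewrite mulr0].
have /cvgrPdist_le /(_ _ e2) [N2 _ hN2] := hq0.
exists (maxn (maxn M N2) 1) => // n /= hn.
have hM : (M <= n)%N by apply: leq_trans hn; rewrite leq_max leq_max leqnn.
have h2 : (N2 <= n)%N by apply: leq_trans hn; rewrite leq_max leq_max leqnn orbT.
have h1 : (1 <= n)%N by apply: leq_trans hn; rewrite leq_max leqnn orbT.
have n0 : (0 : R) < n%:R by rewrite ltr0n.
rewrite sub0r normrN normrM normfV normr_nat.
have := bound (n - M)%N; rewrite subnKC // => hb.
have hq := hN2 n h2; rewrite /= sub0r normrN normrM normr_id normfV normr_nat in hq.
rewrite ler_pdivrMr //.
rewrite ler_pdivrMr // in hq.
have h3 : (n - M)%N%:R <= (n%:R : R) by rewrite ler_nat leq_subr.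
have h4 : (n - M)%N%:R * (eps / 2) <= n%:R * (eps / 2) by rewrite ler_pM2r.
lra.
Qed.

Lemma chung (x c b : nat -> R) (a l : R) (N : nat) :
  (forall n, (N <= n)%N -> x n.+1 = c n * x n + b n) ->
  (forall n, (N <= n)%N -> 0 <= c n <= 1) ->
  (fun n => n%:R * (1 - c n)) @ \oo --> a ->
  b @ \oo --> l -> 0 <= a ->
  (fun n => x n / n%:R) @ \oo --> l / (1 + a).
Proof.
move=> Hx Hc Ha Hb a0.
set L := l / (1 + a).
have a1 : 1 + a != 0 by apply: lt0r_neq0; lra.
pose e n := x n - L * n%:R.
pose dl n := b n - L - L * (n%:R * (1 - c n)).
have hdl : dl @ \oo --> 0.
  apply: lim_eq; first exact: (cvgB (cvgB Hb (cvg_cst L)) (cvgM (cvg_cst L) Ha)).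
  by rewrite /L; field.
have he : forall n, (N <= n)%N -> `|e n.+1| <= `|e n| + `|dl n|.
  move=> n hn.
  have -> : e n.+1 = c n * e n + dl n by rewrite /e /dl Hx // -natr1; ring.
  apply: (le_trans (ler_normD _ _)); rewrite lerD2r normrM.
  have /andP [c0 c1] := Hc n hn.
  rewrite ger0_norm //; apply: ler_piMl => //.
have := ces he hdl => hc.
apply: (@lim_near _ (fun n => e n / n%:R + L) 1).
  move=> n hn; have n0 : (n%:R : R) != 0 by rewrite pnatr_eq0 -lt0n.
  by rewrite /e; field.
apply: lim_eq; first exact: (cvgD hc (cvg_cst L)).
by rewrite add0r.
Qed.
End Asym.
Section Main.
Variable R : realType.
Variable m : nat.
Hypothesis hm : (2 <= m)%N.
Notation Y0 := (@Ycount R 0).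
Notation Y1 := (@Ycount R 1).
Local Notation KK := (m%:R : R).
Local Notation WW n := (Wn R m n).
Local Notation P1 n := (cP1 KK (WW n)).
Local Notation Q n := (cQ KK (WW n)).
Local Notation Rr n := (cR KK (WW n)).
Local Notation T n := (cT KK (WW n)).
Local Notation U n := (cU KK (WW n)).
Local Notation X n := (cX KK (WW n)).
Local Notation Z n := (cZ KK (WW n)).
Local Notation V n := (cV KK (WW n)).
Local Notation mA n := (EA R m n).
Local Notation mB n := (EB R m n).
Local Notation mAA n := (EAA R m n).
Local Notation mAB n := (EAB R m n).
Local Notation mBB n := (EBB R m n).

Lemma hw n : (2 <= n)%N -> (5 <= 1 + n * m.+1)%N.
Proof. move=> hn; nia. Qed.

Lemma recA n : (2 <= n)%N -> mA n.+1 = P1 n * mA n + 1.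
Proof.
move=> hn; have := @E_step R m n 0 1 0 0 0 0 (hw hn).
rewrite /=.
have -> : (fun x => Gq 0 1 0 0 0 0 (Y0 x) (Y1 x)) = (fun x => Y0 x).
  by apply: boolp.funext => x; rewrite /Gq; ring.
move=> H; rewrite [EA _ _ n.+1]/EA H; ring.
Qed.
Lemma recEB n : (2 <= n)%N -> mB n.+1 = Rr n * mA n + Q n * mB n.
Proof.
move=> hn; have := @E_step R m n 0 0 1 0 0 0 (hw hn).
rewrite /=.
have -> : (fun x => Gq 0 0 1 0 0 0 (Y0 x) (Y1 x)) = (fun x => Y1 x).
  by apply: boolp.funext => x; rewrite /Gq; ring.
move=> H; rewrite [EB _ _ n.+1]/EB H; ring.
Qed.

Lemma recEAA n : (2 <= n)%N -> mAA n.+1 = 1 + (2 * P1 n + (P1 n - Q n)) * mA n + Q n * mAA n.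
Proof.
move=> hn; have := @E_step R m n 0 0 0 1 0 0 (hw hn).
rewrite /=.
have -> : (fun x => Gq 0 0 0 1 0 0 (Y0 x) (Y1 x)) = (fun x => Y0 x * Y0 x).
  by apply: boolp.funext => x; rewrite /Gq; ring.
move=> H; rewrite [EAA _ _ n.+1]/EAA H; ring.
Qed.

Lemma recEAB n : (2 <= n)%N -> mAB n.+1 = (Rr n - T n) * mA n + Q n * mB n + T n * mAA n + U n * mAB n.
Proof.
move=> hn; have := @E_step R m n 0 0 0 0 1 0 (hw hn).
rewrite /=.
have -> : (fun x => Gq 0 0 0 0 1 0 (Y0 x) (Y1 x)) = (fun x => Y0 x * Y1 x).
  by apply: boolp.funext => x; rewrite /Gq; ring.
move=> H; rewrite [EAB _ _ n.+1]/EAB H; ring.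
Qed.

Lemma recEBB n : (2 <= n)%N -> mBB n.+1 = (Rr n - X n) * mA n + (Q n - V n) * mB n + X n * mAA n + 2 * Z n * mAB n + V n * mBB n.
Proof.
move=> hn; have := @E_step R m n 0 0 0 0 0 1 (hw hn).
rewrite /=.
have -> : (fun x => Gq 0 0 0 0 0 1 (Y0 x) (Y1 x)) = (fun x => Y1 x * Y1 x).
  by apply: boolp.funext => x; rewrite /Gq; ring.
move=> H; rewrite [EBB _ _ n.+1]/EBB H; ring.
Qed.

Definition vA n := mAA n - mA n * mA n.
Definition cAB n := mAB n - mA n * mB n.
Definition vB n := mBB n - mB n * mB n.

Lemma recVA n : (2 <= n)%N -> vA n.+1 = Q n * vA n +
  ((Q n - P1 n * P1 n) * (mA n * mA n) + (P1 n - Q n) * mA n).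
Proof. by move=> hn; rewrite /vA recEAA // recA //; ring. Qed.

Lemma recCAB n : (2 <= n)%N -> cAB n.+1 = U n * cAB n +
  (T n * vA n + (T n - P1 n * Rr n) * (mA n * mA n)
   + (U n - P1 n * Q n) * (mA n * mB n) - T n * mA n).
Proof. by move=> hn; rewrite /cAB /vA recEAB // recA // recEB //; ring. Qed.

Lemma recVB n : (2 <= n)%N -> vB n.+1 = V n * vB n +
  (X n * vA n + 2 * Z n * cAB n + (X n - Rr n * Rr n) * (mA n * mA n)
   + 2 * (Z n - Q n * Rr n) * (mA n * mB n) + (V n - Q n * Q n) * (mB n * mB n)
   + (Q n - V n) * mB n + (Rr n - X n) * mA n).
Proof. by move=> hn; rewrite /vB /cAB /vA recEBB // recEB //; ring. Qed.

Local Notation ss := (m.+1%:R : R).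
Definition u j n := uu j KK (WW n).
Definition iv j n := ii j KK (WW n).
Definition nd j n := n%:R * iv j n.
Definition nu j n := n%:R * (1 - u j n).

Lemma s_pos : 0 < ss. Proof. by rewrite ltr0n. Qed.
Lemma K2 : 2 <= KK. Proof. by rewrite ler_nat. Qed.
Lemma sK : ss = KK + 1. Proof. by rewrite -natr1. Qed.

Lemma WW_eq n : WW n = ss * n%:R + 1.
Proof. by rewrite /Wn natrD natrM mulrC addrC. Qed.

Lemma iv_eq j n : iv j n = (ss * n%:R + (1 + KK - j%:R))^-1.
Proof. by rewrite /iv /ii WW_eq; congr (_^-1); ring. Qed.

Lemma W_ge n : (1 <= n)%N -> KK + 2 <= WW n.
Proof.
move=> hn; rewrite WW_eq sK.
have : 1 <= (n%:R : R) by rewrite ler1n.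
have := K2; nra.
Qed.

Lemma D_pos j n : (j <= 4)%N -> (1 <= n)%N -> 0 < WW n + KK - j%:R.
Proof.
move=> hj hn; have := W_ge hn; have := K2.
have : (j%:R : R) <= 4 by rewrite (ler_nat R j 4).
lra.
Qed.

Lemma D_nz j n : (j <= 4)%N -> (1 <= n)%N -> WW n + KK - j%:R != 0.
Proof. by move=> hj hn; apply: lt0r_neq0; apply: D_pos. Qed.

Lemma ub j n : (j <= 4)%N -> (1 <= n)%N -> 0 <= u j n <= 1.
Proof.
move=> hj hn; have hD := D_pos hj hn; have := W_ge hn; have := K2.
have : (j%:R : R) <= 4 by rewrite (ler_nat R j 4).
move=> h1 h2 h3; rewrite /u /uu; apply/andP; split.
  by apply: divr_ge0 => //; lra.
by rewrite ler_pdivrMr // mul1r; lra.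
Qed.

Lemma prod01 (x y : R) : 0 <= x <= 1 -> 0 <= y <= 1 -> 0 <= x * y <= 1.
Proof.
move=> /andP[x0 x1] /andP[y0 y1]; apply/andP; split; first exact: mulr_ge0.
exact: mulr_ile1.
Qed.

Lemma L_nd j : nd j @ \oo --> ss^-1.
Proof.
have -> : nd j = (fun n => n%:R * (ss * n%:R + (1 + KK - j%:R))^-1).
  by apply: boolp.funext => n; rewrite /nd iv_eq.
exact: lim_nd s_pos.
Qed.

Lemma L_iv j : iv j @ \oo --> 0.
Proof.
have -> : iv j = (fun n => (ss * n%:R + (1 + KK - j%:R))^-1).
  by apply: boolp.funext => n; rewrite iv_eq.
exact: lim_inv s_pos.
Qed.

Lemma u_eq j n : (j <= 4)%N -> (1 <= n)%N -> u j n = 1 - KK * iv j n.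
Proof.
move=> hj hn; have hD := D_nz hj hn.
by rewrite /u /iv; move: (WW n) hD => w hD; rewrite /uu /ii; field.
Qed.

Lemma L_u j : (j <= 4)%N -> u j @ \oo --> (1 : R).
Proof.
move=> hj; apply: (@lim_near _ _ (fun n => 1 - KK * iv j n) 1).
  by move=> n hn; apply: u_eq.
apply: lim_eq; first exact: (cvgB (cvg_cst (1:R)) (cvgM (cvg_cst KK) (L_iv j))).
by rewrite mulr0 subr0.
Qed.

Lemma L_nu j : (j <= 4)%N -> nu j @ \oo --> KK * ss^-1.
Proof.
move=> hj; apply: (@lim_near _ _ (fun n => KK * nd j n) 1).
  by move=> n hn; rewrite /nu u_eq // /nd; ring.
exact: (cvgM (cvg_cst KK) (L_nd j)).
Qed.

Definition al := 1 / (1 + KK * ss^-1).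

Lemma limA : (fun n => mA n / n%:R) @ \oo --> al.
Proof.
apply: (@chung R (fun n => mA n) (fun n => P1 n) (fun _ => 1) (KK * ss^-1) 1 2).
- by move=> n hn; rewrite recA.
- by move=> n hn; apply: (ub (j:=1)) => //; apply: leq_trans hn.
- exact: (L_nu (j:=1)).
- exact: cvg_cst.
- by apply: divr_ge0; [apply: ler0n|apply: ltW; apply: s_pos].
Qed.

Definition kq := KK * ss^-1.
Lemma kq_ge0 : 0 <= kq.
Proof. by apply: divr_ge0; [apply: ler0n|apply: ltW; apply: s_pos]. Qed.

Lemma LQ : (fun n => n%:R * (1 - Q n)) @ \oo --> 2 * kq.
Proof.
apply: (@lim_near _ _ (fun n => nu 2 n + u 2 n * nu 1 n) 0).
  by move=> n _; rewrite /nu /u /cQ; ring.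
apply: lim_eq; first exact: (cvgD (L_nu (j:=2) isT) (cvgM (L_u (j:=2) isT) (L_nu (j:=1) isT))).
by rewrite /kq; ring.
Qed.

Lemma LU : (fun n => n%:R * (1 - U n)) @ \oo --> 3 * kq.
Proof.
apply: (@lim_near _ _ (fun n => nu 3 n + u 3 n * (n%:R * (1 - Q n))) 0).
  by move=> n _; rewrite /nu /u /cQ /cU; ring.
apply: lim_eq; first exact: (cvgD (L_nu (j:=3) isT) (cvgM (L_u (j:=3) isT) LQ)).
by rewrite /kq; ring.
Qed.

Lemma LV : (fun n => n%:R * (1 - V n)) @ \oo --> 4 * kq.
Proof.
apply: (@lim_near _ _ (fun n => nu 4 n + u 4 n * (n%:R * (1 - U n))) 0).
  by move=> n _; rewrite /nu /u /cU /cV; ring.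
apply: lim_eq; first exact: (cvgD (L_nu (j:=4) isT) (cvgM (L_u (j:=4) isT) LU)).
by rewrite /kq; ring.
Qed.

Lemma Qb n : (1 <= n)%N -> 0 <= Q n <= 1.
Proof. by move=> hn; apply: prod01; apply: ub. Qed.
Lemma Ub n : (1 <= n)%N -> 0 <= U n <= 1.
Proof. by move=> hn; apply: prod01; [apply: prod01|]; apply: ub. Qed.
Lemma Vb n : (1 <= n)%N -> 0 <= V n <= 1.
Proof. by move=> hn; apply: prod01; [apply: prod01; [apply: prod01|]|]; apply: ub. Qed.

Ltac gen n hn :=
  move: (@D_nz 1 n isT hn) (@D_nz 2 n isT hn) (@D_nz 3 n isT hn) (@D_nz 4 n isT hn);
  (have : (n%:R : R) != 0 by rewrite pnatr_eq0 -lt0n);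
  rewrite /nd /nu /u /iv; move: (WW n) (n%:R : R) => w nn n0 d1 d2 d3 d4;
  rewrite /cP1 /cQ /cR /cT /cU /cX /cZ /cV /uu /ii.

Ltac ff := field; repeat (apply/andP; split); done.

Definition be := kq * al / (1 + 2 * kq).

Lemma limB : (fun n => mB n / n%:R) @ \oo --> be.
Proof.
apply: (@chung R (fun n => mB n) (fun n => Q n) (fun n => Rr n * mA n) (2 * kq) (kq * al) 2).
- by move=> n hn; rewrite recEB // addrC.
- by move=> n hn; apply: Qb; apply: leq_trans hn.
- exact: LQ.
- apply: (@lim_near _ _ (fun n => KK * u 1 n * nd 2 n * (mA n / n%:R)) 1).
    by move=> n hn; gen n hn; ff.
  apply: lim_eq.
    exact: (cvgM (cvgM (cvgM (cvg_cst KK) (L_u (j:=1) isT)) (L_nd 2)) limA).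
  by rewrite /kq; ring.
- by apply: mulr_ge0 => //; apply: kq_ge0.
Qed.

Definition lVA := (- KK) * ss^-1 * ss^-1 * (al * al) + KK * ss^-1 * al.
Definition LVA := lVA / (1 + 2 * kq).

Lemma limVA : (fun n => vA n / n%:R) @ \oo --> LVA.
Proof.
apply: (@chung R (fun n => vA n) (fun n => Q n)
  (fun n => (Q n - P1 n * P1 n) * (mA n * mA n) + (P1 n - Q n) * mA n) (2 * kq) lVA 2).
- by move=> n hn; rewrite recVA.
- by move=> n hn; apply: Qb; apply: leq_trans hn.
- exact: LQ.
- apply: (@lim_near _ _ (fun n => (- KK) * u 1 n * nd 1 n * nd 2 n * ((mA n / n%:R) * (mA n / n%:R))
     + KK * u 1 n * nd 2 n * (mA n / n%:R)) 1).
    by move=> n hn; gen n hn; ff.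
  apply: lim_eq; first exact: (cvgD
    (cvgM (cvgM (cvgM (cvgM (cvg_cst (- KK)) (L_u (j:=1) isT)) (L_nd 1)) (L_nd 2)) (cvgM limA limA))
    (cvgM (cvgM (cvgM (cvg_cst KK) (L_u (j:=1) isT)) (L_nd 2)) limA)).
  by rewrite /lVA; ring.
- by apply: mulr_ge0 => //; apply: kq_ge0.
Qed.

Definition lCAB := KK * ss^-1 * LVA + KK * (1 - 0) * ss^-1 * ss^-1 * (al * al)
  + (-2) * KK * ss^-1 * ss^-1 * (al * be) - KK * ss^-1 * al.
Definition LCAB := lCAB / (1 + 3 * kq).

Lemma limCAB : (fun n => cAB n / n%:R) @ \oo --> LCAB.
Proof.
apply: (@chung R (fun n => cAB n) (fun n => U n)
  (fun n => T n * vA n + (T n - P1 n * Rr n) * (mA n * mA n)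
   + (U n - P1 n * Q n) * (mA n * mB n) - T n * mA n) (3 * kq) lCAB 2).
- by move=> n hn; rewrite recCAB.
- by move=> n hn; apply: Ub; apply: leq_trans hn.
- exact: LU.
- apply: (@lim_near _ _ (fun n => KK * u 2 n * u 1 n * nd 3 n * (vA n / n%:R)
     + KK * u 1 n * (1 - 2 * KK * iv 1 n) * nd 2 n * nd 3 n * ((mA n / n%:R) * (mA n / n%:R))
     + (-2) * KK * u 2 n * u 1 n * nd 1 n * nd 3 n * ((mA n / n%:R) * (mB n / n%:R))
     - KK * u 2 n * u 1 n * nd 3 n * (mA n / n%:R)) 1).
    by move=> n hn; gen n hn; ff.
  apply: lim_eq; first exact: (cvgB (cvgD (cvgD
    (cvgM (cvgM (cvgM (cvgM (cvg_cst KK) (L_u (j:=2) isT)) (L_u (j:=1) isT)) (L_nd 3)) limVA)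
    (cvgM (cvgM (cvgM (cvgM (cvgM (cvg_cst KK) (L_u (j:=1) isT))
        (cvgB (cvg_cst (1:R)) (cvgM (cvg_cst (2 * KK)) (L_iv 1)))) (L_nd 2)) (L_nd 3)) (cvgM limA limA)))
    (cvgM (cvgM (cvgM (cvgM (cvgM (cvg_cst ((-2) * KK)) (L_u (j:=2) isT)) (L_u (j:=1) isT)) (L_nd 1)) (L_nd 3)) (cvgM limA limB)))
    (cvgM (cvgM (cvgM (cvgM (cvg_cst KK) (L_u (j:=2) isT)) (L_u (j:=1) isT)) (L_nd 3)) limA)).
  by rewrite /lCAB; ring.
- by apply: mulr_ge0 => //; apply: kq_ge0.
Qed.

Definition lVB := 0 * LVA + 2 * (KK * ss^-1) * LCAB
  + KK * ((KK - 1) * ss^-1 * ss^-1 - KK * ss^-1 * ss^-1) * (al * al)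
  + 2 * (KK * (2 * ss^-1 * ss^-1)) * (al * be)
  + ((-2) * KK) * (ss^-1 * ss^-1 + ss^-1 * ss^-1) * (be * be)
  + (2 * kq) * be + KK * ss^-1 * al.
Definition LVB := lVB / (1 + 4 * kq).

Lemma limVB : (fun n => vB n / n%:R) @ \oo --> LVB.
Proof.
apply: (@chung R (fun n => vB n) (fun n => V n)
  (fun n => X n * vA n + 2 * Z n * cAB n + (X n - Rr n * Rr n) * (mA n * mA n)
   + 2 * (Z n - Q n * Rr n) * (mA n * mB n) + (V n - Q n * Q n) * (mB n * mB n)
   + (Q n - V n) * mB n + (Rr n - X n) * mA n) (4 * kq) lVB 2).
- by move=> n hn; rewrite recVB.
- by move=> n hn; apply: Vb; apply: leq_trans hn.
- exact: LV.
- apply: (@lim_near _ _ (fun n =>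
       KK * (KK - 1) * u 2 n * u 1 n * nd 4 n * iv 3 n * (vA n / n%:R)
     + 2 * (KK * u 3 n * u 2 n * u 1 n * nd 4 n) * (cAB n / n%:R)
     + KK * u 1 n * ((KK - 1) * u 2 n * nd 4 n * nd 3 n - KK * u 1 n * nd 2 n * nd 2 n)
         * ((mA n / n%:R) * (mA n / n%:R))
     + 2 * (KK * u 2 n * u 1 n * ((-2) * KK * iv 1 n * nd 3 n * nd 4 n + 2 * u 1 n * nd 2 n * nd 4 n))
         * ((mA n / n%:R) * (mB n / n%:R))
     + u 2 n * u 1 n * ((-2) * KK) * (u 4 n * nd 1 n * nd 3 n + u 1 n * nd 2 n * nd 4 n)
         * ((mB n / n%:R) * (mB n / n%:R))
     + u 2 n * u 1 n * (nu 4 n + u 4 n * nu 3 n) * (mB n / n%:R)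
     + (KK * u 1 n * nd 2 n - KK * (KK - 1) * u 2 n * u 1 n * nd 4 n * iv 3 n) * (mA n / n%:R)) 1).
    by move=> n hn; gen n hn; ff.
  apply: lim_eq; first exact: (cvgD (cvgD (cvgD (cvgD (cvgD (cvgD (cvgM (cvgM (cvgM (cvgM (cvgM (cvg_cst (KK * (KK - 1) : R)) (L_u (j:=2) isT)) (L_u (j:=1) isT)) (L_nd 4)) (L_iv 3)) limVA) (cvgM (cvgM (cvg_cst (2 : R)) (cvgM (cvgM (cvgM (cvgM (cvg_cst (KK : R)) (L_u (j:=3) isT)) (L_u (j:=2) isT)) (L_u (j:=1) isT)) (L_nd 4))) limCAB)) (cvgM (cvgM (cvgM (cvg_cst (KK : R)) (L_u (j:=1) isT)) (cvgB (cvgM (cvgM (cvgM (cvg_cst (KK - 1 : R)) (L_u (j:=2) isT)) (L_nd 4)) (L_nd 3)) (cvgM (cvgM (cvgM (cvg_cst (KK : R)) (L_u (j:=1) isT)) (L_nd 2)) (L_nd 2)))) (cvgM limA limA))) (cvgM (cvgM (cvg_cst (2 : R)) (cvgM (cvgM (cvgM (cvg_cst (KK : R)) (L_u (j:=2) isT)) (L_u (j:=1) isT)) (cvgD (cvgM (cvgM (cvgM (cvg_cst ((-2) * KK : R)) (L_iv 1)) (L_nd 3)) (L_nd 4)) (cvgM (cvgM (cvgM (cvg_cst (2 : R)) (L_u (j:=1) isT)) (L_nd 2)) (L_nd 4))))) (cvgM limA limB))) (cvgM (cvgM (cvgM (cvgM (L_u (j:=2) isT) (L_u (j:=1) isT))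 (cvg_cst ((-2) * KK : R))) (cvgD (cvgM (cvgM (L_u (j:=4) isT) (L_nd 1)) (L_nd 3)) (cvgM (cvgM (L_u (j:=1) isT) (L_nd 2)) (L_nd 4)))) (cvgM limB limB))) (cvgM (cvgM (cvgM (L_u (j:=2) isT) (L_u (j:=1) isT)) (cvgD (L_nu (j:=4) isT) (cvgM (L_u (j:=4) isT) (L_nu (j:=3) isT)))) limB)) (cvgM (cvgB (cvgM (cvgM (cvg_cst (KK : R)) (L_u (j:=1) isT)) (L_nd 2)) (cvgM (cvgM (cvgM (cvgM (cvg_cst (KK * (KK - 1) : R)) (L_u (j:=2) isT)) (L_u (j:=1) isT)) (L_nd 4)) (L_iv 3))) limA)).
  by rewrite /lVB /kq; ring.
- by apply: mulr_ge0 => //; apply: kq_ge0.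
Qed.

Lemma Kpos : 0 < KK. Proof. have := K2; lra. Qed.

Ltac fpos := field; repeat (apply/andP; split); apply: lt0r_neq0; lra.

Lemma LVA_val : LVA = 2 * KK ^+ 2 * (KK + 1) / ((3 * KK + 1) * (2 * KK + 1) ^+ 2).
Proof. rewrite /LVA /lVA /al /kq sK; have := Kpos => k0; fpos. Qed.

Lemma LCAB_val : LCAB = - (4 * (KK + 1) ^+ 2 * KK ^+ 2)
              / ((4 * KK + 1) * (3 * KK + 1) * (2 * KK + 1) ^+ 2).
Proof. rewrite /LCAB /lCAB /LVA /lVA /be /al /kq sK; have := Kpos => k0; fpos. Qed.

Lemma LVB_val : LVB = 2 * KK ^+ 2 * (KK + 1) * (48 * KK ^+ 3 + 59 * KK ^+ 2 + 27 * KK + 4)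
        / ((5 * KK + 1) * (4 * KK + 1) * (3 * KK + 1) ^+ 2 * (2 * KK + 1) ^+ 2).
Proof. rewrite /LVB /lVB /LCAB /lCAB /LVA /lVA /be /al /kq sK; have := Kpos => k0; fpos. Qed.

End Main.

Unset Implicit Arguments.
Theorem corollary1 (R : realType) (m : nat) (hm : (2 <= m)%N) :
  (fun n : nat => (n%:R)^-1 *: @pa_cov R m n : 'M[R]_2) @ \oo --> (@pa_limit R m : 'M[R]_2).
Proof.
pose d00 : 'M[R]_2 := delta_mx 0 0.
pose d01 : 'M[R]_2 := delta_mx 0 1.
pose d10 : 'M[R]_2 := delta_mx 1 0.
pose d11 : 'M[R]_2 := delta_mx 1 1.
have E : (fun n : nat => (n%:R)^-1 *: @pa_cov R m n : 'M[R]_2) =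
  (fun n => (vA R m n / n%:R) *: d00 + (cAB R m n / n%:R) *: d01
          + (cAB R m n / n%:R) *: d10 + (vB R m n / n%:R) *: d11).
  apply: boolp.funext => n; apply/matrixP => i j.
  rewrite !mxE.
  case: i => [[|[|i]] hi] //; case: j => [[|[|j]] hj] //=.
  - change (pa_E m n (Ycount 0)) with (EA R m n).
    change (pa_E m n (fun d => Ycount 0 d * Ycount 0 d)) with (EAA R m n).
    rewrite /vA; ring.
  - change (pa_E m n (Ycount 0)) with (EA R m n).
    change (pa_E m n (Ycount 1)) with (EB R m n).
    change (pa_E m n (fun d => Ycount 0 d * Ycount 1 d)) with (EAB R m n).
    rewrite /cAB; ring.
  - change (pa_E m n (Ycount 0)) with (EA R m n).
    change (pa_E m n (Ycount 1)) with (EB R m n).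
    have -> : (fun d => Ycount 1 d * Ycount 0 d) = (fun d => Ycount 0 d * Ycount 1 d :> R).
      by apply: boolp.funext => d; rewrite mulrC.
    change (pa_E m n (fun d => Ycount 0 d * Ycount 1 d)) with (EAB R m n).
    rewrite /cAB; ring.
  - change (pa_E m n (Ycount 1)) with (EB R m n).
    change (pa_E m n (fun d => Ycount 1 d * Ycount 1 d)) with (EBB R m n).
    rewrite /vB; ring.
have L : (pa_limit m : 'M[R]_2) = LVA R m *: d00 + LCAB R m *: d01 + LCAB R m *: d10 + LVB R m *: d11.
  apply/matrixP => i j; rewrite !mxE.
  case: i => [[|[|i]] hi] //; case: j => [[|[|j]] hj] //=;
  by rewrite (@LVA_val R m hm) (@LCAB_val R m hm) (@LVB_val R m hm); ring.
rewrite E L.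
exact: (cvgD (cvgD (cvgD (cvgZl (@limVA R m hm)) (cvgZl (@limCAB R m hm))) (cvgZl (@limCAB R m hm))) (cvgZl (@limVB R m hm))).
Qed.
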